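(* There is an absolute constant $C>0$ and a function $\delta(n)\to0$ such that for every directed graph $G$ on $n$ nodes and every $q\in(0,1)$ (possibly depending on $n$), the convergence time of the \textsc{Random Pick} process on $G$ started from a $q$-random state is at most $C(\ln n)^3/q^2$ with probability at least $1-\delta(n)$.
   Context: In a $q$-random state each node is independently colored (red or blue, arbitrarily) with probability $q$ and uncolored otherwise. \textsc{Random Pick} process: in each round $t=1,2,\dots$, every node $v$ with at least one out-neighbor picks an out-neighbor $ps_t(v)$ uniformly at random, independently of everything else; $\mathcal{S}_t(v)=\mathcal{S}_{t-1}(ps_t(v))$ if $\mathcal{S}_{t-1}(v)=u$ (uncolored) and $\mathcal{S}_{t-1}(ps_t(v))$ is colored, else $\mathcal{S}_t(v)=\mathcal{S}_{t-1}(v)$. A state is stable if no uncolored node has a colored out-neighbor; the convergence time is the smallest $t\ge0$ with $\mathcal{S}_t$ stable. *)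

(* Defs.v *)
From HB Require Import structures.
From mathcomp Require Import all_boot all_order all_algebra.
From mathcomp Require Import all_classical all_reals all_analysis.
Set Implicit Arguments. Unset Strict Implicit. Unset Printing Implicit Defensive.
Import Order.TTheory GRing.Theory Num.Theory.
Local Open Scope ring_scope.

(* A state assigns to each node None (uncolored) or Some c (c = true: red,
   c = false: blue). A directed graph on n nodes is a relation e on 'I_n:
   e v w means there is an arc v -> w (w is an out-neighbor of v). *)
Definition state (n : nat) := 'I_n -> option bool.

Definition outdeg (n : nat) (e : rel 'I_n) (v : 'I_n) : nat := #|[set w | e v w]|.

Definition stableb (n : nat) (e : rel 'I_n) (S : state n) : bool :=
  [forall v, forall w, e v w ==> (S v == None) ==> (S w == None)].

Definition step (n : nat) (S : state n) (p : 'I_n -> 'I_n) : state n :=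
  fun v => match S v, S (p v) with
           | None, Some c => Some c
           | _, _ => S v
           end.

(* S_t, where round t (t >= 1) uses the picks ps (t-1). *)
Fixpoint run (n : nat) (S0 : state n) (ps : nat -> 'I_n -> 'I_n) (t : nat)
  : state n :=
  match t with
  | 0 => S0
  | t'.+1 => step (run S0 ps t') (ps t')
  end.

(* Probability of a pick function for one round: every node with at least one
   out-neighbor picks one uniformly at random, independently; nodes without
   out-neighbors pick nothing (encoded as the dummy value p v = v, prob. 1). *)
Definition pick_weight (R : realType) (n : nat) (e : rel 'I_n)
    (p : {ffun 'I_n -> 'I_n}) : R :=
  \prod_(v : 'I_n)
     (if outdeg e v == 0%N then (p v == v)%:R
      else (e v (p v))%:R / (outdeg e v)%:R).

(* Initial q-random state: colored set A (each node independently with prob.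
   q), colors on A chosen arbitrarily (possibly depending on A) by col. *)
Definition init_state (n : nat) (col : {set 'I_n} -> 'I_n -> bool)
    (A : {set 'I_n}) : state n :=
  fun v => if v \in A then Some (col A v) else None.

Definition set_weight (R : realType) (n : nat) (q : R) (A : {set 'I_n}) : R :=
  q ^+ #|A| * (1 - q) ^+ (n - #|A|).

(* Probability that the convergence time is at most the real bound b,
   computed by marginalizing over the first K rounds (K with b <= K):
   the event {tau <= b} = {exists t <= b, S_t stable} only depends on
   the initial state and on the picks of rounds 1..K. *)
Definition prob_conv_le (R : realType) (n : nat) (e : rel 'I_n) (q : R)
    (col : {set 'I_n} -> 'I_n -> bool) (K : nat) (b : R) : R :=
  \sum_(A : {set 'I_n}) set_weight q A *
    \sum_(ps : {ffun 'I_K -> {ffun 'I_n -> 'I_n}})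
       (\prod_(i < K) pick_weight R e (ps i)) *
       ([exists t : 'I_K.+1,
           ((t%:R : R) <= b) &&
           stableb e (run (init_state col A)
                        (fun s => if insub s is Some i then (ps i : 'I_n -> 'I_n)
                                  else id) t)])%:R.

(* Main.v *)
Require Import Defs.
From HB Require Import structures.
From mathcomp Require Import all_boot all_order all_algebra.
From mathcomp Require Import all_classical all_reals all_analysis.
From mathcomp Require Import ring lra zify.
Import Order.TTheory GRing.Theory Num.Theory.
Set Implicit Arguments. Unset Strict Implicit. Unset Printing Implicit Defensive.
Local Open Scope ring_scope.



Lemma sum_sets (R : comRingType) (n : nat) (g : 'I_n -> bool -> R) :
  \sum_(A : {set 'I_n}) \prod_(v : 'I_n) g v (v \in A) =
  \prod_(v : 'I_n) (g v true + g v false).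
Proof.
have -> : \prod_(v : 'I_n) (g v true + g v false) =
          \prod_(v : 'I_n) \sum_(b : bool) g v b.
  by apply: eq_bigr => v _; rewrite big_bool.
rewrite bigA_distr_bigA /=.
rewrite (reindex (fun f : {ffun 'I_n -> bool} => [set x | f x])) /=; last first.
  apply: onW_bij; exists (fun A : {set 'I_n} => [ffun x => x \in A]) => [f|A].
    by apply/ffunP => x; rewrite ffunE inE.
  by apply/setP => x; rewrite inE ffunE.
by apply: eq_bigr => f _; apply: eq_bigr => v _; rewrite inE.
Qed.

Lemma set_weightE (R : realType) n (q : R) (A : {set 'I_n}) :
  set_weight q A = \prod_(v : 'I_n) (if v \in A then q else 1 - q).
Proof.
rewrite /set_weight (bigID (fun v => v \in A)) /=.
rewrite (eq_bigr (fun _ => q)) ?prodr_const; last by move=> v ->.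
rewrite (eq_bigr (fun _ => 1 - q)) ?prodr_const; last by move=> v /negbTE ->.
congr (_ * _ ^+ _).
have H := cardC (mem A); rewrite card_ord in H.
apply: (@addnI #|A|); rewrite subnKC; last by rewrite -[X in (_ <= X)%N]card_ord max_card.
by rewrite -[LHS]H.
Qed.

Lemma sum_set_weight (R : realType) n (q : R) :
  \sum_(A : {set 'I_n}) set_weight q A = 1.
Proof.
under eq_bigr do rewrite set_weightE.
rewrite (@sum_sets _ _ (fun v b => if b then q else 1 - q)).
by rewrite big1 // => v _; rewrite addrC subrK.
Qed.

Lemma set_weight_ge0 (R : realType) n (q : R) (A : {set 'I_n}) :
  0 <= q <= 1 -> 0 <= set_weight q A.
Proof.
move=> /andP[q0 q1]; rewrite /set_weight mulr_ge0 // exprn_ge0 //.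
by rewrite subr_ge0.
Qed.

Lemma sum_set_weight_disj (R : realType) n (q : R) (S : {set 'I_n}) :
  \sum_(A : {set 'I_n}) set_weight q A * ([disjoint S & A])%:R = (1 - q) ^+ #|S|.
Proof.
have E : forall A : {set 'I_n}, set_weight q A * ([disjoint S & A])%:R =
   \prod_(v : 'I_n) (if v \in A then (if v \in S then 0 else q) else 1 - q).
  move=> A; rewrite set_weightE.
  case: (boolP [disjoint S & A]) => dSA.
    rewrite mulr1; apply: eq_bigr => v _; case: ifP => // vA.
    by move/disjointFl: dSA => /(_ v vA) ->.
  rewrite mulr0; apply/esym/eqP; rewrite prodf_seq_eq0.
  move: dSA; rewrite -setI_eq0 => /set0Pn[v]; rewrite inE => /andP[vS vA].
  by apply/hasP; exists v; rewrite ?mem_index_enum // vA vS eqxx.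
under eq_bigr do rewrite E.
rewrite (@sum_sets _ _ (fun v b => if b then (if v \in S then 0 else q) else 1 - q)) /=.
rewrite (bigID (fun v => v \in S)) /=.
rewrite (eq_bigr (fun _ => 1 - q)); last by move=> v ->; rewrite add0r.
rewrite prodr_const [X in _ * X]big1 ?mulr1; last first.
  by move=> v /negbTE ->; rewrite addrC subrK.
by congr (_ ^+ _); apply: eq_card => v; rewrite inE.
Qed.



Lemma sum_ffun_prod (R : comRingType) (I J : finType) (F : I -> J -> R) :
  \sum_(f : {ffun I -> J}) \prod_(i : I) F i (f i) = \prod_(i : I) \sum_(j : J) F i j.
Proof. by rewrite bigA_distr_bigA. Qed.

Lemma sum_indic (R : realType) (T : finType) (P : {set T}) (c : R) :
  \sum_(w : T) (w \in P)%:R * c = #|P|%:R * c.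
Proof.
rewrite (bigID (mem P)) /= [X in _ + X]big1 ?addr0; last by move=> w /negbTE ->; rewrite mul0r.
rewrite (eq_bigr (fun _ => c)); last by move=> w ->; rewrite mul1r.
by rewrite sumr_const mulr_natl.
Qed.

Definition pw (R : realType) n (e : rel 'I_n) (v w : 'I_n) : R :=
  if outdeg e v == 0%N then (w == v)%:R else (e v w)%:R / (outdeg e v)%:R.

Lemma pick_weightE (R : realType) n (e : rel 'I_n) p :
  pick_weight R e p = \prod_v pw R e v (p v).
Proof. by []. Qed.

Lemma pw_ge0 (R : realType) n (e : rel 'I_n) v w : 0 <= pw R e v w.
Proof. by rewrite /pw; case: ifP => _ //; rewrite divr_ge0. Qed.

Lemma pick_weight_ge0 (R : realType) n (e : rel 'I_n) p : 0 <= pick_weight R e p.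
Proof. by rewrite pick_weightE; apply: prodr_ge0 => v _; apply: pw_ge0. Qed.

Lemma sum_pw_indic (R : realType) n (e : rel 'I_n) u (X : {set 'I_n}) :
  outdeg e u != 0%N ->
  \sum_w pw R e u w * (w \in X)%:R = #|[set w | e u w] :&: X|%:R / (outdeg e u)%:R.
Proof.
move=> d0; rewrite /pw (negbTE d0).
transitivity (\sum_w (w \in [set w | e u w] :&: X)%:R * ((outdeg e u)%:R^-1 : R)).
  by apply: eq_bigr => w _; rewrite !inE; case: (e u w); case: (w \in X); rewrite /= ?mulr1 ?mul1r ?mul0r ?mulr0.
by rewrite sum_indic.
Qed.

Lemma sum_pw (R : realType) n (e : rel 'I_n) u : \sum_w pw R e u w = 1.
Proof.
case: (boolP (outdeg e u == 0%N)) => d0.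
  rewrite /pw d0 (bigD1 u) //= eqxx big1 ?addr0 // => w /negbTE -> //.
transitivity (\sum_w pw R e u w * (w \in [set: 'I_n])%:R).
  by apply: eq_bigr => w _; rewrite inE mulr1.
rewrite sum_pw_indic // finset.setIT -/(outdeg e u) divff //.
by rewrite pnatr_eq0.
Qed.

Lemma sum_pick_marg (R : realType) n (e : rel 'I_n) u (h : 'I_n -> R) :
  \sum_(p : {ffun 'I_n -> 'I_n}) pick_weight R e p * h (p u) =
  \sum_w pw R e u w * h w.
Proof.
pose F v w := pw R e v w * (if v == u then h w else 1).
transitivity (\sum_(p : {ffun 'I_n -> 'I_n}) \prod_v F v (p v)).
  apply: eq_bigr => p _; rewrite pick_weightE /F big_split /=; congr (_ * _).
  by rewrite (bigD1 u) //= eqxx big1 ?mulr1 // => v /negbTE ->.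
rewrite sum_ffun_prod (bigD1 u) //= [X in _ * X]big1 ?mulr1.
  by apply: eq_bigr => w _; rewrite /F eqxx.
by move=> v /negbTE vu; rewrite /F; under eq_bigr do rewrite vu mulr1; apply: sum_pw.
Qed.


Lemma sum_rounds (R : realType) n (e : rel 'I_n) K
    (H : 'I_K -> {ffun 'I_n -> 'I_n} -> R) :
  \sum_(ps : {ffun 'I_K -> {ffun 'I_n -> 'I_n}})
     (\prod_(i < K) pick_weight R e (ps i)) * \prod_(i < K) H i (ps i) =
  \prod_(i < K) \sum_(p : {ffun 'I_n -> 'I_n}) pick_weight R e p * H i p.
Proof.
rewrite -sum_ffun_prod; apply: eq_bigr => ps _; by rewrite big_split.
Qed.

Lemma sum_pick_weight1 (R : realType) n (e : rel 'I_n) :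
  \sum_(p : {ffun 'I_n -> 'I_n}) pick_weight R e p = 1.
Proof.
under eq_bigr do rewrite pick_weightE.
by rewrite sum_ffun_prod big1 // => v _; apply: sum_pw.
Qed.

Lemma sum_rounds1 (R : realType) n (e : rel 'I_n) K :
  \sum_(ps : {ffun 'I_K -> {ffun 'I_n -> 'I_n}})
     (\prod_(i < K) pick_weight R e (ps i)) = 1.
Proof.
rewrite (sum_ffun_prod (fun (i : 'I_K) p => pick_weight R e p)) big1 // => i _; exact: sum_pick_weight1.
Qed.

Lemma pick_weight_valid (R : realType) n (e : rel 'I_n) p v :
  pick_weight R e p != 0 ->
  (outdeg e v == 0%N -> p v = v) /\ (outdeg e v != 0%N -> e v (p v)).
Proof.
rewrite pick_weightE prodf_seq_neq0 => /allP /(_ v (mem_index_enum _)) /=.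
rewrite /pw; case: ifP => d0.
  by rewrite pnatr_eq0 eqb0 negbK => /eqP ->.
by case: (e v (p v)) => //; rewrite mul0r eqxx.
Qed.



Lemma pow_le_exp (R : realType) (x : R) (m : nat) :
  x <= 1 -> (1 - x) ^+ m <= expR (- (x * m%:R)).
Proof.
move=> x1; rewrite mulrC -mulrN expRM_natl.
apply: lerXn2r; rewrite ?nnegrE ?subr_ge0 ?expR_ge0 //.
by have := expR_ge1Dx (- x); rewrite addrC.
Qed.

Lemma expR1_le4 (R : realType) : expR (1 : R) <= 4.
Proof.
have h := expR_ge1Dx (- (2^-1 : R)).
have h2 : expR (1 : R) = (expR (2^-1))^+2.
  by rewrite -expRM_natl; congr expR; rewrite mulfV.
have hp : 0 < expR (2^-1 : R) by apply: expR_gt0.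
rewrite expRN in h.
have : expR (2^-1 : R) <= 2.
  have hE : (expR (2^-1 : R))^-1 * expR (2^-1) = 1 by rewrite mulVf // gt_eqF.
  move: h hE hp; set E := expR _; set y := E^-1 => h hE hp.
  nra.
by move=> le2; rewrite h2; nra.
Qed.

Lemma ln_ge1 (R : realType) (n : nat) : (4 <= n)%N -> 1 <= ln (n%:R : R).
Proof.
move=> n4; rewrite -[X in X <= _](expRK 1) ler_ln ?posrE ?expR_gt0 //; last first.
  by rewrite ltr0n; case: n n4.
apply: (le_trans (expR1_le4 R)).
by rewrite ler_nat.
Qed.

Lemma expR_neg3ln (R : realType) (n : nat) (a : R) : (0 < n)%N -> 3 * ln (n%:R : R) <= a ->
  expR (- a) <= (n%:R ^+ 3)^-1.
Proof.
move=> n0 ha.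
have n0' : (0 : R) < n%:R by rewrite ltr0n.
apply: le_trans (_ : expR (- (3%:R * ln (n%:R : R))) <= _).
  by rewrite ler_expR lerN2.
by rewrite expRN expRM_natl lnK ?posrE.
Qed.

Lemma T0_bound (R : realType) (a D q l : R) :
  1 <= l -> 0 < q -> q < 1 -> 0 <= a -> a <= 3 * l + 1 -> 0 <= D -> D <= a / q + 1 ->
  2 * D ^+ 2 * a <= 200 * l ^+ 3 / q ^+ 2.
Proof.
move=> l1 q0 q1 a0 a1 D0 D1.
have Dq : D * q <= 5 * l.
  have : D * q <= (a / q + 1) * q by rewrite ler_pM2r.
  rewrite mulrDl divfK ?gt_eqF // mul1r => h; lra.
have Dq0 : 0 <= D * q by rewrite mulr_ge0 // ltW.
have h2 : (D * q) ^+ 2 <= (5 * l) ^+ 2 by rewrite lerXn2r // nnegrE; lra.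
rewrite ler_pdivlMr ?exprn_gt0 //.
have -> : 2 * D ^+ 2 * a * q ^+ 2 = 2 * (D * q) ^+ 2 * a by rewrite exprMn; ring.
have a4 : a <= 4 * l by lra.
have : (D * q) ^+ 2 * a <= (5 * l) ^+ 2 * (4 * l).
  apply: ler_pM => //; rewrite exprn_ge0 //.
nra.
Qed.



Definition Nb n (e : rel 'I_n) (S : {set 'I_n}) : {set 'I_n} :=
  S :|: [set w | [exists x in S, e x w]].

Definition Ball n (e : rel 'I_n) (j : nat) (u : 'I_n) : {set 'I_n} :=
  iter j (Nb e) [set u].

Definition hit n (e : rel 'I_n) (A : {set 'I_n}) (j : nat) (u : 'I_n) : bool :=
  [exists x in Ball e j u, x \in A].

Lemma Nb_ext n (e : rel 'I_n) (S : {set 'I_n}) : S \subset Nb e S.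
Proof. exact: finset.subsetUl. Qed.

Lemma Nb_mono n (e : rel 'I_n) (S T : {set 'I_n}) : S \subset T -> Nb e S \subset Nb e T.
Proof.
move=> ST; apply/fintype.subsetP => x; rewrite !inE => /orP[xS|/existsP[y /andP[yS eyx]]].
  by rewrite (fintype.subsetP ST _ xS).
by apply/orP; right; apply/existsP; exists y; rewrite (fintype.subsetP ST _ yS).
Qed.

Lemma iter_Nb_mono n (e : rel 'I_n) j (S T : {set 'I_n}) : S \subset T ->
  iter j (Nb e) S \subset iter j (Nb e) T.
Proof. by elim: j => //= j IH ST; apply: Nb_mono; apply: IH. Qed.

Lemma Ball_mono n (e : rel 'I_n) u j k : (j <= k)%N -> Ball e j u \subset Ball e k u.
Proof.
move=> /subnK <-; elim: (k - j)%N => //= m IH.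
by rewrite /Ball ?addSn /=; apply: fintype.subset_trans IH (Nb_ext _ _).
Qed.

Lemma Ball_self n (e : rel 'I_n) u j : u \in Ball e j u.
Proof. apply: (fintype.subsetP (Ball_mono e u (leq0n j))); by rewrite /Ball /= inE. Qed.

Lemma Ball_nb n (e : rel 'I_n) u w j : e u w -> Ball e j w \subset Ball e j.+1 u.
Proof.
move=> euw; rewrite /Ball iterSr; apply: iter_Nb_mono.
apply/fintype.subsetP => x; rewrite !inE => /eqP ->; apply/orP; right.
by apply/existsP; exists u; rewrite inE eqxx.
Qed.

Lemma Ball_dec n (e : rel 'I_n) u j x : x \in Ball e j.+1 u ->
  x = u \/ exists2 w, e u w & x \in Ball e j w.
Proof.
elim: j x => [|j IH] x.
  rewrite /Ball /= !inE => /orP[/eqP -> | /existsP[y /andP[]]]; first by left.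
  rewrite inE => /eqP -> eux; right; exists x => //; by rewrite inE.
rewrite {1}/Ball iterS -/(Ball e j.+1 u) inE => /orP[/IH [->|[w euw xw]]|].
- by left.
- by right; exists w => //; apply: (fintype.subsetP (Ball_mono e w (leqnSn j))).
- rewrite inE => /existsP[y /andP[/IH [->|[w euw yw]] eyx]].
    right; exists x => //; exact: Ball_self.
  right; exists w => //; rewrite /Ball iterS -/(Ball e j w) !inE; apply/orP; right.
  by apply/existsP; exists y; rewrite yw.
Qed.

Lemma hit_mono n (e : rel 'I_n) A j k u : (j <= k)%N -> hit e A j u -> hit e A k u.
Proof.
move=> jk /existsP[x /andP[xB xA]]; apply/existsP; exists x.
by rewrite xA (fintype.subsetP (Ball_mono e u jk)).
Qed.

Lemma hit0 n (e : rel 'I_n) A u : hit e A 0 u = (u \in A).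
Proof.
apply/existsP/idP => [[x /andP[]]|uA]; first by rewrite /Ball /= inE => /eqP ->.
by exists u; rewrite /Ball /= inE eqxx.
Qed.

Lemma hit_step n (e : rel 'I_n) A j u : hit e A j.+1 u -> ~~ hit e A j u ->
  exists2 w, e u w & hit e A j w.
Proof.
move=> /existsP[x /andP[/Ball_dec [->|[w euw xw]] xA]] nh.
  by move: nh; rewrite (hit_mono (leq0n j)) // hit0.
by exists w => //; apply/existsP; exists x; rewrite xw.
Qed.

Lemma hit_nb n (e : rel 'I_n) A j u w : e u w -> hit e A j w -> hit e A j.+1 u.
Proof.
move=> euw /existsP[x /andP[xB xA]]; apply/existsP; exists x.
by rewrite xA (fintype.subsetP (Ball_nb j euw)).
Qed.

Lemma Ball_stable n (e : rel 'I_n) u j : Ball e j u = Ball e j.+1 u ->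
  forall m, (j <= m)%N -> Ball e m u = Ball e j u.
Proof.
move=> E m /subnK <-; elim: (m - j)%N => //= k IH.
rewrite [Ball _ _ _]/= -/(Ball e (k + j) u) IH.
by rewrite [RHS]E.
Qed.

Lemma Ball_grow n (e : rel 'I_n) u m :
  (forall j, (j < m)%N -> Ball e j u != Ball e j.+1 u) -> (m < #|Ball e m u|)%N.
Proof.
elim: m => [|m IH] H.
  by apply/card_gt0P; exists u; apply: Ball_self.
apply: (leq_ltn_trans (IH (fun j jm => H j (ltnW jm)))).
apply: proper_card; rewrite finset.properEneq H // Ball_mono //.
Qed.

Lemma Ball_card n (e : rel 'I_n) u L : (#|Ball e L u| <= L)%N ->
  forall m, Ball e m u \subset Ball e L u.
Proof.
move=> cL.
have [j jL Ej] : exists2 j, (j < L)%N & Ball e j u = Ball e j.+1 u.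
  have : [exists j : 'I_L, Ball e j u == Ball e j.+1 u].
    move: cL; apply: contraLR => /existsPn H; rewrite -ltnNge.
    by apply: Ball_grow => j jL; have := H (Ordinal jL).
  by case/existsP => j /eqP E; exists j.
move=> m; case: (leqP m L) => mL; first by apply: Ball_mono.
rewrite (Ball_stable Ej (ltnW (leq_trans jL (ltnW mL)))).
exact: Ball_mono (ltnW jL).
Qed.

Definition colored n (S : state n) v := S v != None.

Lemma colored_step n (S : state n) p v : colored S v -> colored (step S p) v.
Proof. by rewrite /colored /step; case: (S v). Qed.

Lemma colored_step_pick n (S : state n) p v : colored S (p v) -> colored (step S p) v.
Proof. by rewrite /colored /step; case: (S v) => //; case: (S (p v)). Qed.

Lemma colored_mono n (S0 : state n) f t t' v : (t <= t')%N ->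
  colored (run S0 f t) v -> colored (run S0 f t') v.
Proof.
move=> /subnK <-; elim: (t' - t)%N => //= k IH c.
by rewrite ?addSn /=; apply: colored_step; apply: IH.
Qed.

Definition validf n (e : rel 'I_n) (f : nat -> 'I_n -> 'I_n) :=
  forall t v, f t v = v \/ e v (f t v).

Lemma colored_hit n (e : rel 'I_n) col A f t v : validf e f ->
  colored (run (init_state col A) f t) v -> hit e A t v.
Proof.
move=> vf; elim: t v => [|t IH] v.
  by rewrite /colored /= /init_state hit0; case: (v \in A).
rewrite /colored /= /step.
case E: (run (init_state col A) f t v) => [c|].
  move=> _; apply: (hit_mono (leqnSn t)); apply: IH; by rewrite /colored E.
case E2: (run (init_state col A) f t (f t v)) => [c|] // _.
case: (vf t v) => [fv|evf].
  by move: E2; rewrite fv E.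
apply: (hit_nb evf); apply: IH; by rewrite /colored E2.
Qed.

Lemma claim n (e : rel 'I_n) col A f (L W : nat) (Tg : nat -> 'I_n -> {set 'I_n}) :
  (forall j u, Tg j u \subset [set w | hit e A j w]) ->
  (forall u j, (j < L)%N -> ~~ hit e A j u -> hit e A j.+1 u ->
     exists s, [/\ (j * W <= s)%N, (s < j.+1 * W)%N & f s u \in Tg j u]) ->
  forall j u, (j <= L)%N -> hit e A j u -> colored (run (init_state col A) f (j * W)) u.
Proof.
move=> TgH NoF; elim=> [|j IH] u jL.
  by rewrite hit0 /colored /= /init_state => ->.
case: (boolP (hit e A j u)) => hj hj1.
  by apply: (colored_mono (leq_mul (leqnSn j) (leqnn W))); apply: IH => //; apply: ltnW.
have [s [s1 s2 sT]] := NoF u j jL hj hj1.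
have : colored (run (init_state col A) f s.+1) u.
  rewrite /=; apply: colored_step_pick.
  apply: (colored_mono s1); apply: IH; first exact: ltnW.
  by have := fintype.subsetP (TgH j u) _ sT; rewrite inE.
by apply: colored_mono.
Qed.

Lemma stable_at n (e : rel 'I_n) col A f (L W : nat) (Tg : nat -> 'I_n -> {set 'I_n}) :
  validf e f ->
  (forall u, hit e A L u || (#|Ball e L u| <= L)%N) ->
  (forall j u, Tg j u \subset [set w | hit e A j w]) ->
  (forall u j, (j < L)%N -> ~~ hit e A j u -> hit e A j.+1 u ->
     exists s, [/\ (j * W <= s)%N, (s < j.+1 * W)%N & f s u \in Tg j u]) ->
  stableb e (run (init_state col A) f (L * W)).
Proof.
move=> vf G2 TgH NoF.
apply/forallP => v; apply/forallP => w; apply/implyP => evw; apply/implyP => /eqP vN.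
apply/negPn/negP => wc.
have hw := colored_hit vf wc.
have hv := hit_nb evw hw.
have hL : hit e A L v.
  case/orP: (G2 v) => // cB.
  move: hv => /existsP[x /andP[xB xA]]; apply/existsP; exists x.
  by rewrite xA (fintype.subsetP (Ball_card cB (L * W).+1)).
have := claim col TgH NoF (leqnn L) hL.
by rewrite /colored vN.
Qed.

Definition Nset n (e : rel 'I_n) u : {set 'I_n} := [set w | e u w].

Definition block n (e : rel 'I_n) (D0 : nat) u (i : nat) : {set 'I_n} :=
  [set x in Nset e u | (index x (enum (Nset e u)) %/ D0 == i)%N].

Lemma outdegE n (e : rel 'I_n) u : outdeg e u = size (enum (Nset e u)).
Proof. by rewrite /outdeg cardE. Qed.

Lemma block_card n (e : rel 'I_n) D0 u i : (0 < D0)%N -> (i < outdeg e u %/ D0)%N ->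
  (D0 <= #|block e D0 u i|)%N.
Proof.
move=> D0p ir.
set s := enum (Nset e u).
have us : uniq s by apply: enum_uniq.
have hk : forall k : 'I_D0, (i * D0 + k < size s)%N.
  move=> k; rewrite -outdegE.
  apply: (@leq_trans ((i.+1) * D0)); first by rewrite mulSnr ltn_add2l.
  apply: (@leq_trans (outdeg e u %/ D0 * D0)); last exact: leq_trunc_div.
  by rewrite leq_mul2r ir orbT.
pose g (k : 'I_D0) := nth u s (i * D0 + k).
have ginj : injective g.
  move=> k1 k2 /eqP; rewrite /g nth_uniq // => /eqP h; apply: val_inj => /=.
  by apply/eqP; rewrite -(eqn_add2l (i * D0)); apply/eqP.
rewrite -[X in (X <= _)%N](card_ord D0) -(card_imset _ ginj).
apply: subset_leq_card; apply/fintype.subsetP => x /imsetP[k _ ->].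
rewrite /block inE; apply/andP; split.
  by rewrite -(mem_enum (mem (Nset e u))) -/s /g mem_nth.
rewrite /g index_uniq //.
by rewrite divnMDl // divn_small ?addn0.
Qed.

Lemma blocks_count n (e : rel 'I_n) D0 u (A : {set 'I_n}) : (0 < D0)%N ->
  (forall i, (i < outdeg e u %/ D0)%N -> ~~ [disjoint block e D0 u i & A]) ->
  (outdeg e u %/ D0 <= #|Nset e u :&: A|)%N.
Proof.
move=> D0p H.
set r := (outdeg e u %/ D0)%N.
pose f (i : 'I_r) := odflt u [pick x in block e D0 u i :&: A].
have fP : forall i : 'I_r, f i \in block e D0 u i :&: A.
  move=> i; rewrite /f; case: pickP => [x //|/= H0].
  have := H i (ltn_ord i); rewrite -setI_eq0 => /set0Pn[x xi].
  by move: (H0 x); rewrite xi.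
have finj : injective f.
  move=> i1 i2 E; apply: val_inj => /=.
  have := fP i1; have := fP i2; rewrite E !inE => /andP[/andP[_ /eqP <-] _] /andP[/andP[_ /eqP ->] _].
  by [].
rewrite -[X in (X <= _)%N](card_ord r) -(card_imset _ finj).
apply: subset_leq_card; apply/fintype.subsetP => x /imsetP[i _ ->].
by have := fP i; rewrite !inE => /andP[/andP[-> _] ->].
Qed.

Definition good1 n (e : rel 'I_n) (A : {set 'I_n}) D0 u :=
  (outdeg e u < D0)%N || (outdeg e u %/ D0 <= #|Nset e u :&: A|)%N.
Definition good2 n (e : rel 'I_n) (A : {set 'I_n}) D0 u :=
  hit e A D0 u || (#|Ball e D0 u| <= D0)%N.
Definition good n (e : rel 'I_n) (A : {set 'I_n}) D0 :=
  [forall u, good1 e A D0 u && good2 e A D0 u].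

Lemma ind_le_sum (R : realType) (I : finType) (b : bool) (c : I -> bool) :
  (b -> exists i, c i) -> (b%:R : R) <= \sum_i (c i)%:R.
Proof.
case: b => [/(_ isT) [i ci]|_]; last by rewrite sumr_ge0.
rewrite (bigD1 i) //= ci lerDl sumr_ge0 //.
Qed.

Lemma outdeg_le n (e : rel 'I_n) u : (outdeg e u <= n)%N.
Proof. by rewrite /outdeg -[X in (_ <= X)%N](card_ord n) max_card. Qed.

Lemma bad1_prob (R : realType) n (e : rel 'I_n) (q : R) D0 u :
  0 <= q <= 1 -> (0 < D0)%N ->
  \sum_(A : {set 'I_n}) set_weight q A * (~~ good1 e A D0 u)%:R <= n%:R * (1 - q) ^+ D0.
Proof.
move=> /andP[q0 q1] D0p.
set r := (outdeg e u %/ D0)%N.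
apply: (@le_trans _ _ (\sum_(A : {set 'I_n}) set_weight q A *
    \sum_(i < r) ([disjoint block e D0 u i & A])%:R)).
  apply: ler_sum => A _; apply: ler_wpM2l; first by apply: set_weight_ge0; rewrite q0.
  apply: ind_le_sum; rewrite /good1 negb_or => /andP[_ nb].
  apply/existsP; move: nb; apply: contraLR => /existsPn H; rewrite negbK.
  by apply: (blocks_count D0p) => i ir; have := H (Ordinal ir).
under eq_bigr do rewrite mulr_sumr.
rewrite exchange_big /=.
under eq_bigr do rewrite sum_set_weight_disj.
apply: (@le_trans _ _ (\sum_(i < r) (1 - q) ^+ D0)).
  apply: ler_sum => i _; apply: ler_wiXn2l; rewrite ?subr_ge0 ?lerBlDr ?lerDl //.
  exact: block_card.
rewrite sumr_const card_ord -[X in X <= _]mulr_natl ler_wpM2r ?exprn_ge0 ?subr_ge0 // ler_nat.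
apply: leq_trans (leq_div _ _) (outdeg_le e u).
Qed.

Lemma bad2_prob (R : realType) n (e : rel 'I_n) (q : R) D0 u :
  0 <= q <= 1 ->
  \sum_(A : {set 'I_n}) set_weight q A * (~~ good2 e A D0 u)%:R <= (1 - q) ^+ D0.
Proof.
move=> /andP[q0 q1].
set B := Ball e D0 u.
apply: (@le_trans _ _ (\sum_(A : {set 'I_n}) set_weight q A *
    ((D0 < #|B|)%N%:R * ([disjoint B & A])%:R))).
  apply: ler_sum => A _; apply: ler_wpM2l; first by apply: set_weight_ge0; rewrite q0.
  rewrite /good2 negb_or -ltnNge.
  case: (boolP (hit e A D0 u)) => hh /=; first by rewrite mulr_ge0.
  have -> : [disjoint B & A].
    move: hh; apply: contraNT; rewrite -setI_eq0 => /set0Pn[x]; rewrite inE => /andP[xB xA].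
    by apply/existsP; exists x; rewrite xB xA.
  by rewrite mulr1.
under eq_bigr do rewrite mulrCA.
rewrite -mulr_sumr sum_set_weight_disj.
case: (boolP (D0 < #|B|)%N) => h; rewrite ?mul0r ?mul1r ?exprn_ge0 ?subr_ge0 //.
apply: ler_wiXn2l; rewrite ?subr_ge0 ?lerBlDr ?lerDl // ltnW //.
Qed.

Lemma bad_prob (R : realType) n (e : rel 'I_n) (q : R) D0 :
  0 <= q <= 1 -> (0 < D0)%N ->
  \sum_(A : {set 'I_n}) set_weight q A * (~~ good e A D0)%:R <=
    n%:R * (n.+1%:R * (1 - q) ^+ D0).
Proof.
move=> q01 D0p.
apply: (@le_trans _ _ (\sum_(A : {set 'I_n}) set_weight q A *
    \sum_u ((~~ good1 e A D0 u)%:R + (~~ good2 e A D0 u)%:R))).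
  apply: ler_sum => A _; apply: ler_wpM2l; first exact: set_weight_ge0.
  case: (boolP (good e A D0)) => g; first by rewrite sumr_ge0 // => u _; rewrite addr_ge0.
  move: g => /forallPn[u]; rewrite negb_and => nb.
  rewrite (bigD1 u) //=; apply: ler_wpDr.
    by apply: sumr_ge0 => v _; rewrite addr_ge0.
  by case/orP: nb => ->; rewrite ?lerDl ?lerDr.
under eq_bigr do rewrite mulr_sumr.
rewrite exchange_big /=.
apply: (@le_trans _ _ (\sum_(u : 'I_n) (n.+1%:R * (1 - q) ^+ D0))); last first.
  by rewrite sumr_const card_ord [X in _ <= X]mulr_natl.
apply: ler_sum => u _.
under eq_bigr do rewrite mulrDr.
rewrite big_split /= -addn1 natrD mulrDl mul1r.
apply: lerD; [exact: bad1_prob | exact: bad2_prob].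
Qed.


Definition Tg n (e : rel 'I_n) (A : {set 'I_n}) D0 (j : nat) u : {set 'I_n} :=
  if (outdeg e u < D0)%N then [set w | e u w && hit e A j w]
  else [set w | e u w && (w \in A)].

Definition win (W j s : nat) := (j * W <= s)%N && (s < j.+1 * W)%N.

Definition Fev n (e : rel 'I_n) (A : {set 'I_n}) D0 W K
    (ps : {ffun 'I_K -> {ffun 'I_n -> 'I_n}}) u :=
  [exists j : 'I_D0, [&& ~~ hit e A j u, hit e A j.+1 u &
     [forall s : 'I_K, win W j s ==> (ps s u \notin Tg e A D0 j u)]]].

Lemma Tg_hit n (e : rel 'I_n) A D0 j u : Tg e A D0 j u \subset [set w | hit e A j w].
Proof.
apply/fintype.subsetP => w; rewrite /Tg; case: ifP => _; rewrite !inE => /andP[_] //.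
by move=> wA; apply: (hit_mono (leq0n j)); rewrite hit0.
Qed.

Lemma rate n (e : rel 'I_n) A D0 j u : (0 < D0)%N -> good e A D0 ->
  ~~ hit e A j u -> hit e A j.+1 u ->
  (0 < outdeg e u)%N /\ (outdeg e u <= 2 * D0 * #|Nset e u :&: Tg e A D0 j u|)%N.
Proof.
move=> D0p /forallP /(_ u) /andP[g1 _] nh h1.
rewrite /Tg; case: ifP => dlt.
  have [w euw hw] := hit_step h1 nh.
  have wN : w \in Nset e u :&: [set w | e u w && hit e A j w] by rewrite !inE euw hw.
  have c1 : (0 < #|Nset e u :&: [set w | e u w && hit e A j w]|)%N.
    by apply/card_gt0P; exists w.
  have d1 : (0 < outdeg e u)%N by apply/card_gt0P; exists w; rewrite inE.
  have := leq_mul (leqnn (2 * D0)) c1; rewrite muln1 => hh.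
  split => //; move: dlt hh; set c := #|_|; set d := outdeg e u; move=> *; lia.
move: g1; rewrite /good1 dlt /= => g1.
have -> : Nset e u :&: [set w | e u w && (w \in A)] = Nset e u :&: A.
  by apply/setP => w; rewrite !inE; case: (e u w).
have dge : (D0 <= outdeg e u)%N by rewrite leqNgt dlt.
have r1 : (0 < outdeg e u %/ D0)%N by rewrite divn_gt0.
have := divn_eq (outdeg e u) D0; have := ltn_pmod (outdeg e u) D0p.
split; first by apply: leq_trans dge.
have := leq_mul g1 (leqnn D0); have := leq_mul r1 (leqnn D0).
set r := (outdeg e u %/ D0)%N; set m := (outdeg e u %% D0)%N.
set d := outdeg e u; set c := #|_|.
move=> *; lia.
Qed.

Lemma prod_win (R : realType) (K W j : nat) (c : R) : (j.+1 * W <= K)%N ->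
  \prod_(s < K) (if win W j s then c else 1) = c ^+ W.
Proof.
move=> hK.
rewrite -(big_mkord xpredT (fun s => if win W j s then c else 1)).
rewrite (@big_cat_nat _ _ _ (j * W) 0 K) //=; last by apply: leq_trans hK; rewrite leq_mul2r leqnSn orbT.
rewrite big1_seq ?mul1r; last first.
  move=> s /andP[_]; rewrite mem_index_iota /win => /andP[_ h]; by rewrite leqNgt h.
rewrite (@big_cat_nat _ _ _ (j * W + W) (j * W) K) ?leq_addr //=; last by rewrite -mulSnr.
rewrite [X in _ * X]big1_seq ?mulr1; last first.
  move=> s /andP[_]; rewrite mem_index_iota /win mulSnr addnC => /andP[h _]; by rewrite ltnNge h andbF.
rewrite big_seq_cond (eq_bigr (fun _ => c)); last first.
  move=> s /andP[]; rewrite mem_index_iota /win mulSnr => /andP[h1 h2] _; by rewrite h1 h2.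
by rewrite -big_seq_cond prodr_const_nat addKn.
Qed.

Lemma notin_indic (R : realType) n (X : {set 'I_n}) (w : 'I_n) :
  ((w \notin X)%:R : R) = 1 - (w \in X)%:R.
Proof. by case: (w \in X); rewrite ?subrr ?subr0. Qed.

Lemma window_fail (R : realType) n (e : rel 'I_n) K W j u (X : {set 'I_n}) :
  (j.+1 * W <= K)%N -> outdeg e u != 0%N ->
  \sum_(ps : {ffun 'I_K -> {ffun 'I_n -> 'I_n}})
     (\prod_(i < K) pick_weight R e (ps i)) *
     ([forall s : 'I_K, win W j s ==> (ps s u \notin X)])%:R =
  (1 - #|Nset e u :&: X|%:R / (outdeg e u)%:R) ^+ W.
Proof.
move=> hK d0.
transitivity (\sum_(ps : {ffun 'I_K -> {ffun 'I_n -> 'I_n}})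
     (\prod_(i < K) pick_weight R e (ps i)) *
     \prod_(s < K) (fun (s : 'I_K) p => if win W j s then ((p u \notin X)%:R : R) else 1) s (ps s)).
  apply: eq_bigr => ps _; congr (_ * _).
  case: (boolP [forall s : 'I_K, win W j s ==> (ps s u \notin X)]) => [/forallP H|/forallPn[s]].
    rewrite big1 // => s _; have := H s; case: (win W j s) => //= ->; by [].
  rewrite negb_imply => /andP[ws /negbTE xs]; apply/esym/eqP; rewrite prodf_seq_eq0.
  by apply/hasP; exists s; rewrite ?mem_index_enum //= ws xs.
rewrite (sum_rounds e (fun (s : 'I_K) p => if win W j s then ((p u \notin X)%:R : R) else 1)).
rewrite -(prod_win _ hK); apply: eq_bigr => s _.
case: (win W j s); last by rewrite (eq_bigr _ (fun p _ => mulr1 _)) sum_pick_weight1.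
rewrite (sum_pick_marg e u (fun w => ((w \notin X)%:R : R))).
under eq_bigr do rewrite notin_indic mulrBr mulr1.
by rewrite sumrB sum_pw -sum_pw_indic.
Qed.

Lemma tele_hit (R : realType) n (e : rel 'I_n) A D0 u :
  \sum_(j < D0) ((~~ hit e A j u && hit e A j.+1 u)%:R : R) <= 1.
Proof.
have E : forall j : nat, ((~~ hit e A j u && hit e A j.+1 u)%:R : R) =
    (hit e A j.+1 u)%:R - (hit e A j u)%:R.
  move=> j; case: (boolP (hit e A j u)) => hj.
    by rewrite (hit_mono (leqnSn j) hj) subrr.
  by rewrite subr0.
rewrite (eq_bigr (fun j : 'I_D0 => (hit e A j.+1 u)%:R - (hit e A j u)%:R)); last by move=> j _; apply: E.
rewrite -(big_mkord xpredT (fun j => ((hit e A j.+1 u)%:R : R) - (hit e A j u)%:R)).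
by rewrite telescope_sumr //; case: (hit e A D0 u); case: (hit e A 0 u) => //=.
Qed.

Lemma ind3 (R : realType) (a b c : bool) : (([&& a, b & c])%:R : R) = (a && b)%:R * c%:R.
Proof. by case: a; case: b; case: c; rewrite /= ?mulr1 ?mul0r ?mulr0. Qed.

Lemma fev_prob (R : realType) n (e : rel 'I_n) A D0 W K u (eps : R) :
  (0 < D0)%N -> (D0 * W <= K)%N -> 0 <= eps ->
  (forall m d : nat, (0 < d)%N -> (d <= 2 * D0 * m)%N -> (m <= d)%N ->
     (1 - m%:R / d%:R) ^+ W <= eps) ->
  \sum_(ps : {ffun 'I_K -> {ffun 'I_n -> 'I_n}})
     (\prod_(i < K) pick_weight R e (ps i)) * (good e A D0 && Fev e A D0 W ps u)%:R <= eps.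
Proof.
move=> D0p hK eps0 Heps.
case: (boolP (good e A D0)) => g; last first.
  by rewrite big1 // => ps _; rewrite /= mulr0.
apply: (@le_trans _ _ (\sum_(ps : {ffun 'I_K -> {ffun 'I_n -> 'I_n}})
     (\prod_(i < K) pick_weight R e (ps i)) *
     \sum_(j < D0) ((~~ hit e A j u && hit e A j.+1 u)%:R *
        ([forall s : 'I_K, win W j s ==> (ps s u \notin Tg e A D0 j u)])%:R))).
  apply: ler_sum => ps _; apply: ler_wpM2l; first by apply: prodr_ge0 => i _; apply: pick_weight_ge0.
  apply: (@le_trans _ _ (\sum_(j < D0) ([&& ~~ hit e A j u, hit e A j.+1 u &
        [forall s : 'I_K, win W j s ==> (ps s u \notin Tg e A D0 j u)]])%:R)).
    by apply: ind_le_sum => /= /existsP.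
  apply: ler_sum => j _.
  by rewrite ind3.
under eq_bigr do rewrite mulr_sumr.
rewrite exchange_big /=.
apply: (@le_trans _ _ (\sum_(j < D0) ((~~ hit e A j u && hit e A j.+1 u)%:R * eps))); last first.
  by rewrite -mulr_suml ler_piMl // tele_hit.
apply: ler_sum => j _.
case: (boolP (~~ hit e A j u && hit e A j.+1 u)) => ab; last first.
  by rewrite !mul0r big1 // => ps _; rewrite mul0r mulr0.
rewrite mul1r.
under eq_bigr do rewrite mulrCA mul1r.
have [d0 dle] := rate D0p g (andP ab).1 (andP ab).2.
have jK : (j.+1 * W <= K)%N by apply: leq_trans hK; rewrite leq_mul2r ltn_ord orbT.
rewrite window_fail //; last by rewrite -lt0n.
apply: Heps => //.
rewrite /outdeg; apply: subset_leq_card; exact: finset.subsetIl.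
Qed.

Definition psf n K (ps : {ffun 'I_K -> {ffun 'I_n -> 'I_n}}) : nat -> 'I_n -> 'I_n :=
  fun s => if insub s is Some i then (ps i : 'I_n -> 'I_n) else id.

Lemma psf_valid (R : realType) n (e : rel 'I_n) K (ps : {ffun 'I_K -> {ffun 'I_n -> 'I_n}}) :
  \prod_(i < K) pick_weight R e (ps i) != 0 -> validf e (psf ps).
Proof.
rewrite prodf_seq_neq0 => /allP H t v; rewrite /psf.
case: insubP => [i _ _|_]; last by left.
have := H i (mem_index_enum _) => /= /(pick_weight_valid v) [h1 h2].
case: (boolP (outdeg e v == 0%N)) => d0; [left; exact: h1 | right; exact: h2].
Qed.

Lemma pointwise (R : realType) n (e : rel 'I_n) col K (A : {set 'I_n}) (D0 W : nat) (b : R)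
    (ps : {ffun 'I_K -> {ffun 'I_n -> 'I_n}}) :
  (D0 * W <= K)%N -> (D0 * W)%:R <= b ->
  (\prod_(i < K) pick_weight R e (ps i)) *
    (1 - (~~ good e A D0)%:R - \sum_u (good e A D0 && Fev e A D0 W ps u)%:R) <=
  (\prod_(i < K) pick_weight R e (ps i)) *
    ([exists t : 'I_K.+1,
           ((t%:R : R) <= b) &&
           stableb e (run (init_state col A)
                        (fun s => if insub s is Some i then (ps i : 'I_n -> 'I_n)
                                  else id) t)])%:R.
Proof.
move=> hK hb.
case: (eqVneq (\prod_(i < K) pick_weight R e (ps i)) 0) => [->|w0]; first by rewrite !mul0r.
have w_ge0 : 0 <= \prod_(i < K) pick_weight R e (ps i).
  by apply: prodr_ge0 => i _; apply: pick_weight_ge0.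
apply: ler_wpM2l => //.
have S0 : 0 <= \sum_u ((good e A D0 && Fev e A D0 W ps u)%:R : R) by apply: sumr_ge0.
case: (boolP (good e A D0)) => g /=; last first.
  by rewrite big1 // subrr subr0 ler0n.
case: (boolP [exists u, Fev e A D0 W ps u]) => [/existsP[u fu]|nf].
  rewrite subr0 (bigD1 u) //= fu /= opprD addrA subrr sub0r.
  apply: (@le_trans _ _ 0); last by rewrite ler0n.
  by rewrite oppr_le0 sumr_ge0.
rewrite subr0 big1 ?subr0; last first.
  by move=> u _; move: nf => /existsPn /(_ u) /negbTE ->.
rewrite ler1n lt0b; apply/existsP.
have hK' : (D0 * W < K.+1)%N by rewrite ltnS.
exists (Ordinal hK'); rewrite /= hb /=.
apply: (@stable_at n e col A (psf ps) D0 W (fun j u => Tg e A D0 j u)).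
- exact: (psf_valid w0).
- by move=> u; move: g => /forallP /(_ u) /andP[_].
- by move=> j u; apply: Tg_hit.
- move=> u j jL nh h1.
  move: nf => /existsPn /(_ u); rewrite /Fev => /existsPn /(_ (Ordinal jL)) /=.
  rewrite nh h1 /= => /forallPn[s]; rewrite negb_imply negbK => /andP[ws sT].
  exists s; split; try by move: ws => /andP[].
  by rewrite /psf insubT /=; [exact: ltn_ord | move=> ?; rewrite (_ : Sub _ _ = s) //; apply: val_inj].
Qed.

Lemma main_bound (R : realType) n (e : rel 'I_n) (q : R) col K (D0 W : nat) (b eps eps' : R) :
  0 <= q <= 1 -> (0 < D0)%N -> (D0 * W <= K)%N -> (D0 * W)%:R <= b -> 0 <= eps ->
  (forall m d : nat, (0 < d)%N -> (d <= 2 * D0 * m)%N -> (m <= d)%N ->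
     (1 - m%:R / d%:R) ^+ W <= eps) ->
  (1 - q) ^+ D0 <= eps' ->
  1 - (n%:R * (n.+1%:R * eps') + n%:R * eps) <= prob_conv_le e q col K b.
Proof.
move=> q01 D0p hK hb eps0 Heps heps'.
rewrite /prob_conv_le.
have inner : forall A : {set 'I_n},
  1 - (~~ good e A D0)%:R - n%:R * eps <=
  \sum_(ps : {ffun 'I_K -> {ffun 'I_n -> 'I_n}})
       (\prod_(i < K) pick_weight R e (ps i)) *
       ([exists t : 'I_K.+1,
           ((t%:R : R) <= b) &&
           stableb e (run (init_state col A)
                        (fun s => if insub s is Some i then (ps i : 'I_n -> 'I_n)
                                  else id) t)])%:R.
  move=> A.
  apply: (@le_trans _ _ (\sum_(ps : {ffun 'I_K -> {ffun 'I_n -> 'I_n}})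
       (\prod_(i < K) pick_weight R e (ps i)) *
    (1 - (~~ good e A D0)%:R - \sum_u (good e A D0 && Fev e A D0 W ps u)%:R))); last first.
    by apply: ler_sum => ps _; apply: pointwise.
  under eq_bigr do rewrite mulrBr mulrBr mulr1 mulr_sumr.
  rewrite !sumrB sum_rounds1 -mulr_suml sum_rounds1 mul1r exchange_big /=.
  rewrite lerB //.
  apply: (@le_trans _ _ (\sum_(u < n) eps)); last by rewrite sumr_const card_ord mulr_natl.
  by apply: ler_sum => u _; apply: fev_prob.
apply: (@le_trans _ _ (\sum_(A : {set 'I_n}) set_weight q A *
     (1 - (~~ good e A D0)%:R - n%:R * eps))); last first.
  apply: ler_sum => A _; apply: ler_wpM2l; [exact: set_weight_ge0 | exact: inner].
under eq_bigr do rewrite mulrBr mulrBr mulr1.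
rewrite !sumrB sum_set_weight -mulr_suml sum_set_weight mul1r.
rewrite opprD addrA lerB //; apply: lerB => //.
apply: le_trans (bad_prob e q01 D0p) _.
rewrite ler_wpM2l // ler_wpM2l //.
Qed.

Local Open Scope classical_set_scope.
Local Open Scope ring_scope.

Lemma prob_ge0 (R : realType) n (e : rel 'I_n) (q : R) col K b :
  0 <= q <= 1 -> 0 <= prob_conv_le e q col K b.
Proof.
move=> q01; apply: sumr_ge0 => A _; apply: mulr_ge0; first exact: set_weight_ge0.
apply: sumr_ge0 => ps _; apply: mulr_ge0 => //.
by apply: prodr_ge0 => i _; apply: pick_weight_ge0.
Qed.

Unset Implicit Arguments.

Theorem theorem3p6 (R : realType) :
  exists (C : R) (delta : nat -> R),
    0 < C /\ delta @ \oo --> 0 /\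
    forall (n : nat) (e : rel 'I_n), irreflexive e ->
    forall (q : R), 0 < q < 1 ->
    forall (col : {set 'I_n} -> 'I_n -> bool) (K : nat),
      C * ln (n%:R) ^+ 3 / q ^+ 2 <= K%:R ->
      1 - delta n <= prob_conv_le e q col K (C * ln (n%:R) ^+ 3 / q ^+ 2).
Proof.
exists 200, (fun n : nat => 4 * (n.+1%:R : R)^-1).
split => //; split.
  have := @cvgMl_tmp _ _ _ _ (@harmonic R) 4 0 cvg_harmonic.
  by rewrite mulr0; apply; exact: _.
move=> n e _ q /andP[q0 q1] col K hK.
have q01 : 0 <= q <= 1 by rewrite !ltW.
case: (ltnP n 4) => n4.
  apply: le_trans (prob_ge0 e col K _ q01).
  rewrite subr_le0 ler_pdivlMr ?ltr0n // mul1r ler_nat; exact: n4.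
set l := ln (n%:R : R).
have l1 : 1 <= l by apply: ln_ge1.
have l0 : 0 <= 3 * l by lra.
set a := (Num.truncn (3 * l)).+1.
have ha1 : 3 * l < a%:R by apply: truncnS_gt.
have ha2 : a%:R <= 3 * l + 1.
  by rewrite /a -addn1 natrD lerD2r truncn_le.
have aq0 : 0 <= a%:R / q by rewrite divr_ge0 ?ltW.
set D0 := (Num.truncn (a%:R / q)).+1.
have hD1 : a%:R / q < D0%:R by apply: truncnS_gt.
have hD2 : D0%:R <= a%:R / q + 1.
  by rewrite /D0 -addn1 natrD lerD2r truncn_le.
have D0p : (0 < D0)%N by [].
set W := (2 * D0 * a)%N.
have hb : ((D0 * W)%N%:R : R) <= 200 * l ^+ 3 / q ^+ 2.
  have -> : ((D0 * W)%N%:R : R) = 2 * (D0%:R) ^+ 2 * a%:R.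
    by rewrite /W !natrM; ring.
  apply: T0_bound => //; lra.
have hK' : (D0 * W <= K)%N by rewrite -(ler_nat R); apply: le_trans hb hK.
have n0 : (0 < n)%N by apply: leq_trans n4.
have Nn : (0 : R) < n%:R by rewrite ltr0n.
have eps0 : (0 : R) <= (n%:R ^+ 3)^-1 by rewrite invr_ge0 exprn_ge0 // ltW.
have ea : expR (- a%:R) <= (n%:R ^+ 3 : R)^-1 by apply: expR_neg3ln => //; apply: ltW.
apply: le_trans (@main_bound R n e q col K D0 W _ (n%:R ^+ 3)^-1 (n%:R ^+ 3)^-1 q01 D0p hK' hb eps0 _ _).
- rewrite lerB //.
  have N4 : (4 : R) <= n%:R by rewrite (ler_nat R 4 n).
  have -> : (n.+1%:R : R) = n%:R + 1 by rewrite -natr1.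
  move: Nn N4; set N := (n%:R : R) => Nn N4.
  have -> : N * ((N + 1) / N ^+ 3) + N / N ^+ 3 = (N * (N + 1) + N) / N ^+ 3.
    by ring.
  rewrite ler_pdivrMr ?exprn_gt0 // mulrAC ler_pdivlMr; last lra.
  nra.
- move=> m d d0 dle mle.
  have dR : (0 : R) < d%:R by rewrite ltr0n.
  have x1 : m%:R / d%:R <= (1 : R) by rewrite ler_pdivrMr // mul1r ler_nat.
  apply: le_trans (pow_le_exp _ x1) _; apply: le_trans ea.
  rewrite ler_expR lerN2 /W !natrM.
  have : (d%:R : R) <= 2 * D0%:R * m%:R by rewrite -(natrM _ 2 D0) -natrM ler_nat.
  move=> h.
  have -> : m%:R / d%:R * (2 * D0%:R * a%:R) = (2 * D0%:R * m%:R / d%:R) * (a%:R : R) by ring.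
  have r1 : (1 : R) <= 2 * D0%:R * m%:R / d%:R by rewrite ler_pdivlMr // mul1r.
  have a0 : (0 : R) <= a%:R by [].
  nra.
- apply: le_trans (pow_le_exp _ (ltW q1)) _; apply: le_trans ea.
  rewrite ler_expR lerN2.
  have : a%:R < D0%:R * q by rewrite -ltr_pdivrMr.
  rewrite mulrC => /ltW; exact.
Qed.
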